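(* Let $A\in(0,1)$, $M<0$, $Q>0$, $S>0$ and consider the planar system $$\frac{du}{d\tau}=u^2\big((u+A)(1-u)(u-M)-Qv\big),\qquad \frac{dv}{d\tau}=S(u+A)(u-v)v$$ on $\{u\ge 0,\ v\ge 0\}$. Put $T=1-A+M$, $L=A(M+1)-Q-M$ and $g(u)=u^3-Tu^2-Lu+AM$. Let $u^*\in(0,1)$ be a root of $g$, and set $\Delta=(u^*-T)^2-4\big(u^*(u^*-T)-L\big)$ and $u^*_\pm=\tfrac12\big(T-u^*\pm\sqrt{\Delta}\big)$ whenever $\Delta\ge 0$, with the root $u^*$ chosen so that $u^*\le u^*_-\le u^*_+$. Assume $T>0$, $L<0$ and $\Delta=0$, so that the equilibria $P_2=(u^*_-,u^*_-)$ and $P_3=(u^*_+,u^*_+)$ coincide. Assume moreover that $$S=\frac{Q\,(T-u^* )}{1+A+M-u^*}.$$ Then the equilibrium $P_2=P_3=(u^*_-,u^*_-)$ is a cusp point.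
   Context: The positive equilibria of the system are the points $(u,u)$ with $u>0$ a root of $g$; since $g(0)=AM<0<Q=g(1)$, $g$ always has a root in $(0,1)$. For such a root $u^*$, $\Delta$ is the discriminant and $u^*_\pm$ are the roots of the quadratic $g(u)/(u-u^* )=u^2+(u^*-T)u+u^*(u^*-T)-L$. A cusp point (in the sense of Andronov et al.) is an equilibrium whose Jacobian matrix is nonzero and nilpotent, i.e. has a double zero eigenvalue with a single Jordan block; it is a codimension-two (Bogdanov--Takens type) singularity. *)

(* Defs.v *)
From HB Require Import structures.
From mathcomp Require Import all_boot all_order all_algebra.
From mathcomp Require Import all_classical all_reals all_analysis.
Set Implicit Arguments. Unset Strict Implicit. Unset Printing Implicit Defensive.
Import Order.TTheory GRing.Theory Num.Theory.
Local Open Scope ring_scope.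

Section Model.
Variables (R : realType) (A M Q S : R).

Definition fu (u v : R) : R := u ^+ 2 * ((u + A) * (1 - u) * (u - M) - Q * v).
Definition fv (u v : R) : R := S * (u + A) * (u - v) * v.

Definition Tpar : R := 1 - A + M.
Definition Lpar : R := A * (M + 1) - Q - M.
Definition gpoly (u : R) : R := u ^+ 3 - Tpar * u ^+ 2 - Lpar * u + A * M.
Definition Delta (us : R) : R := (us - Tpar) ^+ 2 - 4 * (us * (us - Tpar) - Lpar).
Definition uminus (us : R) : R := (Tpar - us - Num.sqrt (Delta us)) / 2.
Definition uplus (us : R) : R := (Tpar - us + Num.sqrt (Delta us)) / 2.

Definition jacobian (u v : R) : 'M[R]_2 :=
  \matrix_(i < 2, j < 2)
    (if i == 0 :> nat then
       (if j == 0 :> nat then derive1 (fun x => fu x v) u else derive1 (fun y => fu u y) v)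
     else
       (if j == 0 :> nat then derive1 (fun x => fv x v) u else derive1 (fun y => fv u y) v)).

Definition is_equilibrium (u v : R) : Prop := fu u v = 0 /\ fv u v = 0.
Definition nilpotent_mx (J : 'M[R]_2) : Prop := exists k : nat, J ^+ k = 0.
Definition cusp_point (u v : R) : Prop :=
  is_equilibrium u v /\ jacobian u v != 0 /\ nilpotent_mx (jacobian u v).
End Model.

(* Main.v *)
Require Import Defs.
From HB Require Import structures.
From mathcomp Require Import all_boot all_order all_algebra.
From mathcomp Require Import all_classical all_reals all_analysis.
From mathcomp Require Import ring lra.
Import Order.TTheory GRing.Theory Num.Theory.
Local Open Scope ring_scope.

Lemma d1h (R : realType) (p : {poly R}) x : derive1 (horner p) x = p^`().[x].
Proof. by rewrite -derivE. Qed.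

Theorem theorem2 (R : realType) (A M Q S us : R)
  (hA0 : 0 < A) (hA1 : A < 1) (hM : M < 0) (hQ : 0 < Q) (hS : 0 < S)
  (hus0 : 0 < us) (hus1 : us < 1) (hroot : gpoly A M Q us = 0)
  (hT : 0 < Tpar A M) (hL : Lpar A M Q < 0)
  (hD : Delta A M Q us = 0)
  (hord1 : us <= uminus A M Q us) (hord2 : uminus A M Q us <= uplus A M Q us)
  (hSval : S = Q * (Tpar A M - us) / (1 + A + M - us)) :
  cusp_point A M Q S (uminus A M Q us) (uminus A M Q us).
Proof.
set w := uminus A M Q us.
have hw : w = (1 - A + M - us) / 2.
  by rewrite /w /uminus hD sqrtr0 subr0 /Tpar.
have w0 : 0 < w by apply: lt_le_trans hord1.
clearbody w.
have hDn : 1 + A + M - us != 0.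
  apply/eqP => h0; move: hS; rewrite hSval h0 invr0 mulr0 ltxx //.
have hSw : S * (w + A) = Q * w.
  rewrite hSval hw /Tpar; field; exact: hDn.
have hg : (w + A) * (1 - w) * (w - M) - Q * w = 0.
  have e : (w + A) * (1 - w) * (w - M) - Q * w =
    - gpoly A M Q us + (w - us) * (Delta A M Q us / 4).
    by rewrite /gpoly /Delta /Tpar /Lpar hw; field.
  by rewrite e hroot hD mul0r mulr0 oppr0 addr0.
have hg' : (1 - w + (w + A) * -1) * (w - M) + (w + A) * (1 - w) - Q = 0.
  have e : (1 - w + (w + A) * -1) * (w - M) + (w + A) * (1 - w) - Q =
    Delta A M Q us / 4.
    by rewrite /Delta /Tpar /Lpar hw; field.
  by rewrite e hD mul0r.
set c := Q * w ^+ 2.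
have hJ : Defs.jacobian A M Q S w w = \matrix_(i < 2, j < 2) (if j == 0 :> nat then c else - c).
  apply/matrixP => i j; rewrite !mxE.
  case: i => [[|[|//]] Hi]; case: j => [[|[|//]] Hj] /=.
  - have -> : (fun x => fu A M Q x w) = horner ('X^2 * (('X + A%:P)*(1-'X)*('X - M%:P) - Q%:P * w%:P)).
      by apply/funext => x; rewrite /fu !hornerE.
    rewrite d1h !poly.derivE !hornerE /c.
    apply/eqP; rewrite -subr_eq0; apply/eqP.
    transitivity ((w + w) * ((w + A) * (1 - w) * (w - M) - Q * w) +
      w ^+ 2 * ((1 - w + (w + A) * -1) * (w - M) + (w + A) * (1 - w) - Q)).
      ring.
    by rewrite hg hg'; ring.
  - have -> : (fun y => fu A M Q w y) = horner (w%:P^+2 * ((w + A)%:P * (1 - w)%:P * (w - M)%:P - Q%:P * 'X)).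
      by apply/funext => y; rewrite /fu !hornerE; ring.
    rewrite d1h !poly.derivE !hornerE /c; ring.
  - have -> : (fun x => fv A S x w) = horner (S%:P * ('X + A%:P) * ('X - w%:P) * w%:P).
      by apply/funext => x; rewrite /fv !hornerE.
    rewrite d1h !poly.derivE !hornerE.
    have e : S * (w + A) * w = c by rewrite hSw /c; ring.
    by rewrite subrr mulr0 add0r.
  - have -> : (fun y => fv A S w y) = horner (S%:P * (w + A)%:P * (w%:P - 'X) * 'X).
      by apply/funext => y; rewrite /fv !hornerE; ring.
    rewrite d1h !poly.derivE !hornerE /c hSw subrr mulr0 addr0; ring.
split; [split|split].
- by rewrite /fu hg mulr0.
- by rewrite /fv subrr mulr0 mul0r.
- rewrite hJ; apply/eqP => H.
  have := congr1 (fun m : 'M[R]_2 => m 0 0) H; rewrite !mxE /= /c => /eqP.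
  by rewrite mulf_eq0 expf_eq0 /= (gt_eqF hQ) (gt_eqF w0).
- exists 2%N; rewrite hJ expr2; apply/matrixP => i j.
  rewrite !mxE big_ord_recr big_ord1 /= !mxE /=.
  by rewrite mulNr addrN.
Qed.
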